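(* Let $n\ge 2$ and $t\ge 0$ be integers, and let $a_1,\dots,a_t$ be integers with $1<a_1<\cdots<a_t<n$ and $\gcd(a_j,2n)=1$ for $1\le j\le t$. Then for any edge $e$ of $C_{2n}(1,a_1,\dots,a_t)$, the graph $C_{2n}(1,a_1,\dots,a_t)-e$ obtained by deleting $e$ satisfies $\chi_{la}(C_{2n}(1,a_1,\dots,a_t)-e)=3$.
   Context: For an integer $m\ge 3$ and integers $s_1,\dots,s_k$, the circulant graph $C_m(s_1,\dots,s_k)$ is the simple graph with vertex set $\mathbb Z_m$ in which distinct vertices $u,v$ are adjacent if and only if $u-v\equiv \pm s_i\pmod m$ for some $i$. For a connected graph $G=(V,E)$ with $q=|E|$, a local antimagic labeling is a bijection $f:E\to\{1,\dots,q\}$ such that adjacent vertices $x,y$ satisfy $f^+(x)\ne f^+(y)$, where $f^+(x)=\sum f(e)$ over edges $e$ incident to $x$; $\chi_{la}(G)$ is the minimum number of distinct values of $f^+$ over all local antimagic labelings $f$ of $G$. *)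

(* Defs.v *)
From mathcomp Require Import all_boot all_order.
Set Implicit Arguments. Unset Strict Implicit. Unset Printing Implicit Defensive.

(* A simple graph on a finite vertex type V is given by an adjacency relation
   (assumed symmetric and irreflexive where relevant). *)

Definition circ_adj (m : nat) (S : seq nat) (u v : 'I_m) : bool :=
  (u != v) && has (fun s => ((u + s) %% m == v) || ((v + s) %% m == u)) S.

Definition edges (V : finType) (adj : rel V) : {set {set V}} :=
  [set e : {set V} | [exists u, exists v, adj u v && (e == [set u; v])]].

Definition del_edge (V : finType) (adj : rel V) (e : {set V}) : rel V :=
  fun u v => adj u v && ([set u; v] != e).

Definition vsum (V : finType) (adj : rel V) (f : {set V} -> nat) (x : V) : nat :=
  \sum_(e in edges adj | x \in e) f e.

Definition local_antimagic (V : finType) (adj : rel V) (f : {set V} -> nat) : Prop :=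
  [/\ {in edges adj &, injective f},
      (forall e, e \in edges adj -> 1 <= f e <= #|edges adj|) &
      (forall x y, adj x y -> vsum adj f x != vsum adj f y)].

Definition num_colors (V : finType) (adj : rel V) (f : {set V} -> nat) : nat :=
  size (undup [seq vsum adj f x | x <- enum V]).

Definition chi_la_eq (V : finType) (adj : rel V) (k : nat) : Prop :=
  (exists f, local_antimagic adj f /\ num_colors adj f = k) /\
  (forall f, local_antimagic adj f -> k <= num_colors adj f).

(* Main.v *)
Require Import Defs.
From mathcomp Require Import all_boot all_order.
From mathcomp Require Import zify.
Set Implicit Arguments. Unset Strict Implicit. Unset Printing Implicit Defensive.

Definition om (N : nat) (H : 0 < N) (x : nat) : 'I_N := Ordinal (ltn_pmod x H).

Lemma modn_addK_neq x k N : 0 < k < N -> (x + k) %% N != x %% N.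
Proof.
move=> /andP[k0 kN]; rewrite -[x in _ != x %% _]addn0.
by rewrite eqn_modDl mod0n modn_small // -lt0n.
Qed.

Lemma odd2n n : odd (2 * n) = false. Proof. by rewrite oddM. Qed.

Lemma adj_odd n S (x y : 'I_(2*n)) : all odd S -> circ_adj S x y -> odd x != odd y.
Proof.
move=> hS /andP[_ /hasP[s sS /orP[/eqP<- | /eqP<-]]];
have so : odd s := allP hS s sS;
by rewrite odd_mod ?odd2n // oddD so addbT; case: (odd _).
Qed.

Lemma set2_eq (T : finType) (a b c d : T) : a != b -> [set a; b] = [set c; d] ->
  (a = c /\ b = d) \/ (a = d /\ b = c).
Proof.
move=> ab E.
have ha : a \in [set c; d] by rewrite -E set21.
have hb : b \in [set c; d] by rewrite -E set22.
have hc : c \in [set a; b] by rewrite E set21.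
have hd : d \in [set a; b] by rewrite E set22.
case/set2P: ha => ha; case/set2P: hb => hb; subst.
- by rewrite eqxx in ab.
- by left.
- by right.
- by rewrite eqxx in ab.
Qed.

Lemma dcount (V : finType) (adj : rel V) (f : {set V} -> nat) (P : pred V) :
  (forall x y, adj x y -> P x != P y) ->
  \sum_(x | P x) vsum adj f x = \sum_(E in edges adj) f E.
Proof.
move=> hP; rewrite /vsum.
rewrite (exchange_big_dep (fun E => E \in edges adj)) /=; last by move=> ? ? _ /andP[].
apply: eq_bigr => E hE.
have := hE; rewrite inE => /existsP[a /existsP[b /andP[hab /eqP Eab]]].
have hPab := hP _ _ hab.
rewrite (big_pred1 (if P a then a else b)) // => x /=.
rewrite Eab in hE *; move: hE; rewrite !inE => -> /=.
have ab : a != b by apply: contraNneq hPab => ->.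
case: (boolP (x == a)) => [/eqP->|xa] /=.
  by rewrite andbT; case: (P a); rewrite ?eqxx // (negbTE ab).
case: (boolP (x == b)) => [/eqP->|xb] /=.
  move: hPab; rewrite andbT; case: (P a); case: (P b); rewrite //= ?eqxx //.
  by rewrite eq_sym (negbTE ab).
by rewrite andbF; case: (P a); rewrite ?(negbTE xa) ?(negbTE xb).
Qed.


Lemma sum_parity_b n K (b : bool) : \sum_(x < 2*n | odd x == b) K = n*K.
Proof.
rewrite big_mkcond /=.
rewrite -(big_mkord xpredT (fun i => if odd i == b then K else 0)).
elim: n => [|n IH]; first by rewrite big_geq.
have -> : 2 * n.+1 = (2*n).+2 by lia.
rewrite !big_nat_recr //= odd2n IH; move: IH; case: b => _ /=; lia.
Qed.

Lemma sum_parity n K : \sum_(x < 2*n | odd x) K = n*K /\ \sum_(x < 2*n | ~~ odd x) K = n*K.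
Proof.
split.
  rewrite -(sum_parity_b n K true); apply: eq_bigl => x; by case: (odd x).
rewrite -(sum_parity_b n K false); apply: eq_bigl => x; by case: (odd x).
Qed.

Lemma lower n S (u v : 'I_(2*n)) f : 1 < n -> 1 \in S -> all odd S -> circ_adj S u v ->
  local_antimagic (del_edge (circ_adj S) [set u; v]) f ->
  3 <= num_colors (del_edge (circ_adj S) [set u; v]) f.
Proof.
move=> n1 S1 Sodd huv [finj frange fprop].
set G := del_edge _ _.
set c := vsum G f.
have Np : 0 < 2*n by lia.
case: (boolP [exists x, exists y, exists z, [&& c x != c y, c y != c z & c x != c z]]).
  case/existsP=> x /existsP[y /existsP[z /and3P[h1 h2 h3]]].
  rewrite /num_colors -/c.
  have -> : 3 = size [:: c x; c y; c z] by [].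
  apply: uniq_leq_size; first by rewrite /= !inE negb_or h1 h3 h2.
  move=> w; rewrite !inE mem_undup => /or3P[] /eqP-> ; apply: map_f; exact: mem_enum.
move=> /negP H3; exfalso.
have H3' : forall x y z, c x != c y -> c y != c z -> c x = c z.
  move=> x y z h1 h2; apply/eqP; apply: contraT => h3; exfalso; apply: H3.
  by apply/existsP; exists x; apply/existsP; exists y; apply/existsP; exists z; rewrite h1 h2 h3.
pose p := if (u.+1 %% (2*n) == v) then val u else if (v.+1 %% (2*n) == u) then val v else val u.
pose w l := om Np (p.+1 + l).
have contra1 : forall (x : 'I_(2*n)) l, l.+1 < (2*n) -> (x.+1 + l) %% (2*n) = x -> False.
  move=> x l hl hx; have := @modn_addK_neq x l.+1 (2*n).
  rewrite addnS -addSn hx (modn_small (ltn_ord x)) eqxx => H.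
  suff : false by []; apply: H; lia.
have adjw : forall l, l.+1 < (2*n) -> G (w l) (w l.+1).
  move=> l hl; rewrite /G /del_edge.
  have wne : w l != w l.+1.
    apply/eqP => /(congr1 val) /= /eqP; rewrite eq_sym (_ : p.+1 + l.+1 = (p.+1 + l) + 1) ?addn1 ?addnS //.
    by rewrite -addn1; apply/negP/modn_addK_neq; lia.
  apply/andP; split.
    apply/andP; split => //; apply/hasP; exists 1 => //; apply/orP; left.
    by rewrite /= modnDml addn1 addnS.
  apply/negP => /eqP E; have := set2_eq wne E; case => [[h1 h2]|[h1 h2]].
  - have uv : u.+1 %% (2*n) == v.
      by rewrite -h1 -h2 /= -addn1 modnDml addn1 addnS.
    have pu : p = u by rewrite /p uv.
    apply: (contra1 u l); first lia.
    by rewrite -{1}pu -h1.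
  - have vu : v.+1 %% (2*n) == u.
      by rewrite -h1 -h2 /= -addn1 modnDml addn1 addnS.
    have pv : p = v.
      rewrite /p vu; case: ifP => // /eqP uv.
      have := @modn_addK_neq v 2 (2*n); rewrite (modn_small (ltn_ord v)).
      move=> H; exfalso.
      have e : (v + 2) %% (2*n) = v.
        by rewrite -{2}uv -(eqP vu) -[(_ %% _).+1]addn1 modnDml addn1 addn2.
      move: H; rewrite e eqxx => H; have := H ltac:(lia); by [].
    apply: (contra1 v l); first lia.
    by rewrite -{1}pv -h1.
have cw : forall l, l.+1 < (2*n) -> c (w l) != c (w l.+1) := fun l hl => fprop _ _ (adjw l hl).
have alt : forall l, l < (2*n) -> c (w l) = c (w (odd l)).
  elim/ltn_ind => l IH hl.
  case: l IH hl => [|[|l]] IH hl //.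
  rewrite /= negbK -(IH l) //; last lia.
  symmetry; apply: (H3' _ (w l.+1)); apply: cw; lia.
have cx : forall x : 'I_(2*n), c x = c (w (odd x (+) odd p.+1)).
  move=> x; pose l := (x + ((2*n) - p.+1 %% (2*n))) %% (2*n).
  have wl : w l = x.
    apply: val_inj => /=; rewrite modnDmr {1}(divn_eq p.+1 (2*n)).
    have := ltn_pmod p.+1 Np => hr.
    rewrite (_ : _ + _ = (p.+1 %/ (2*n)).+1 * (2*n) + x); last by rewrite /(2*n) in hr *; lia.
    by rewrite modnMDl modn_small.
  have ox : odd x = odd p.+1 (+) odd l by rewrite -wl /= odd_mod ?odd2n // oddD.
  rewrite ox -{1}wl alt ?ltn_pmod //.
  by congr (c (w (nat_of_bool _))); case: (odd l); case: (odd p.+1).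
have hpar : forall x y, G x y -> odd x != odd y.
  by move=> x y /andP[h _]; apply: adj_odd h.
have hpar' : forall x y, G x y -> ~~ odd x != ~~ odd y.
  by move=> x y /hpar; case: (odd x); case: (odd y).
have s1 := dcount f hpar; have s2 := dcount f hpar'.
rewrite -s2 in s1.
rewrite (eq_bigr (fun _ => c (w (~~ odd p.+1)))) in s1; last first.
  by move=> x ox; rewrite -/c cx ox.
rewrite [in RHS](eq_bigr (fun _ => c (w (odd p.+1)))) in s1; last first.
  by move=> x ox; rewrite -/c cx (negbTE ox).
have [e1 e2] := sum_parity n (c (w (~~ odd p.+1))).
have [e3 e4] := sum_parity n (c (w (odd p.+1))).
rewrite e1 e4 in s1.
move/eqP: s1; rewrite eqn_mul2l (_ : (n == 0) = false) ?orFb; last by apply/negbTE; lia.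
have := cw 0 ltac:(lia).
by case: (odd p.+1) => /= /negP h /eqP e; apply: h; rewrite e.
Qed.


Lemma walk_inj n y s k k' : coprime s (2*n) -> k < 2*n -> k' < 2*n ->
  (y + k*s) %% (2*n) = (y + k'*s) %% (2*n) -> k = k'.
Proof.
move=> cop.
wlog kk : k k' / k <= k'.
  move=> H hk hk' e; case: (leqP k k') => h; first exact: H.
  by apply/esym; apply: H; rewrite ?e // ltnW.
move=> hk hk' /eqP; rewrite eq_sym eqn_modDl eqn_mod_dvd ?leq_mul2r ?kk ?orbT //.
rewrite -mulnBl Gauss_dvdl; last by rewrite coprime_sym.
move=> hd.
case: (posnP (k' - k)) => [h|h]; first lia.
have := dvdn_leq h hd; lia.
Qed.

Lemma walk_surj n (Np : 0 < 2*n) y s : coprime s (2*n) ->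
  forall x : 'I_(2*n), exists k : 'I_(2*n), om Np (y + k * s) = x.
Proof.
move=> cop x.
have inj : injective (fun k : 'I_(2*n) => om Np (y + k * s)).
  move=> k k' /(congr1 val) /= h; apply: val_inj; exact: (walk_inj cop (ltn_ord k) (ltn_ord k') h).
have [g gK Kg] := injF_bij inj.
by exists (g x); rewrite Kg.
Qed.

Lemma om_succ n (Np : 0 < 2*n) y k s :
  val (om Np (y + k.+1 * s)) = (val (om Np (y + k * s)) + s) %% (2*n).
Proof. by rewrite /= modnDml mulSnr addnA. Qed.

Definition Fe n (Np : 0 < 2*n) (S : seq nat) (y : nat) (j k : nat) : {set 'I_(2*n)} :=
  [set om Np (y + k * nth 0 S j); om Np (y + k.+1 * nth 0 S j)].

Lemma om_neq n (Np : 0 < 2*n) y k s : 0 < s < 2*n ->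
  om Np (y + k * s) != om Np (y + k.+1 * s).
Proof.
move=> hs; apply/eqP => /(congr1 val); rewrite om_succ => /esym /eqP; apply/negP.
by have := @modn_addK_neq (y + k * s) s (2*n) hs; rewrite -modnDml.
Qed.

Lemma Fe_edge n (Np : 0 < 2*n) S y j k : j < size S -> 0 < nth 0 S j < 2*n ->
  Fe Np S y j k \in edges (circ_adj S).
Proof.
move=> hj hs; rewrite inE; apply/existsP; exists (om Np (y + k * nth 0 S j)).
apply/existsP; exists (om Np (y + k.+1 * nth 0 S j)); rewrite eqxx andbT.
apply/andP; split; first exact: om_neq.
apply/hasP; exists (nth 0 S j); first exact: mem_nth.
by rewrite -om_succ eqxx.
Qed.

Lemma edge_Fe n (Np : 0 < 2*n) S y E : all (fun s => coprime s (2*n)) S ->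
  E \in edges (circ_adj S) -> exists j k, [/\ j < size S, k < 2*n & E = Fe Np S y j k].
Proof.
move=> cop; rewrite inE => /existsP[a /existsP[b /andP[/andP[ab /hasP[s sS hs]] /eqP->]]].
wlog hab : a b ab hs / (a + s) %% (2*n) == b.
  move=> H; case/orP: (hs) => h; first exact: H.
  rewrite setUC; apply: H => //; by rewrite ?h ?orbT // eq_sym.
have [k hk] := walk_surj Np y (allP cop s sS) a.
exists (index s S), k; split; first by rewrite index_mem.
  exact: ltn_ord.
rewrite /Fe nth_index // hk; congr [set _; _]; apply: val_inj.
by rewrite om_succ hk (eqP hab).
Qed.

Lemma Fe_inj n (Np : 0 < 2*n) S y j k j' k' : uniq S -> all (fun s => 0 < s < n) S ->
  all (fun s => coprime s (2*n)) S -> j < size S -> j' < size S -> k < 2*n -> k' < 2*n ->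
  Fe Np S y j k = Fe Np S y j' k' -> j = j' /\ k = k'.
Proof.
move=> uS ltS cop hj hj' hk hk' E.
have hs := allP ltS _ (mem_nth 0 hj); have hs' := allP ltS _ (mem_nth 0 hj').
set s := nth 0 S j in hs E; set s' := nth 0 S j' in hs' E.
have ab : om Np (y + k * s) != om Np (y + k.+1 * s) by apply: om_neq; lia.
case: (set2_eq ab E) => [[h1 h2]|[h1 h2]].
- have ss : s = s'.
    move: (congr1 val h2); rewrite !om_succ h1 => /eqP; rewrite eqn_modDl !modn_small; try lia.
  have jj : j = j' by apply/eqP; rewrite -(nth_uniq 0 hj hj' uS) -/s -/s' ss.
  split => //; apply: (walk_inj (y := y) (allP cop _ (mem_nth 0 hj)) hk hk').
  by move: (congr1 val h1) => /=; rewrite -jj.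
- exfalso; move: (congr1 val h1) (congr1 val h2); rewrite !om_succ => e1 e2.
  rewrite -e2 modnDml -addnA in e1.
  have := @modn_addK_neq (val (om Np (y + k * s))) (s + s') (2*n).
  rewrite -e1 (modn_small (ltn_ord _)) eqxx => H; have := H ltac:(lia); by [].
Qed.


Lemma mod2N N x : 0 < N -> x < 2 * N -> x %% N = if x < N then x else x - N.
Proof.
move=> Np hx; case: ifP => h; first by rewrite modn_small.
by rewrite -{1}(subnK (_ : N <= x)) ?modnDr ?modn_small //; lia.
Qed.

Lemma mod_pred N k kx : 0 < N -> k < N -> kx < N -> (k.+1 %% N == kx) = (k == (kx + N.-1) %% N).
Proof.
move=> Np hk hkx; rewrite !mod2N //; try lia.
case: ifP; case: ifP => h1 h2; apply/eqP/eqP; lia.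
Qed.

Definition inner n k := if odd k then (2*n).-1 - k./2 else k./2.
Definition piv (j0 j : nat) := if j == j0 then 0 else if j == 0 then j0 else j.
Definition lab n j0 j k := 2*n * piv j0 j + inner n k.
Definition col n (y : nat) (x : nat) :=
  if odd x != odd y then (2*n).-1 else if x == y then n else 2*n.

Lemma inner_lt n k : k < 2*n -> inner n k < 2*n.
Proof. rewrite /inner => hk; have := odd_double_half k; case: (odd k) => /=; lia. Qed.

Lemma inner_inj n k k' : k < 2*n -> k' < 2*n -> inner n k = inner n k' -> k = k'.
Proof.
rewrite /inner => h1 h2; have := odd_double_half k; have := odd_double_half k'.
case: (odd k); case: (odd k') => /=; lia.
Qed.

Lemma inner_eq0 n k : 0 < n -> k < 2*n -> (inner n k == 0) = (k == 0).
Proof.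
rewrite /inner => h0 hk; have := odd_double_half k.
case: (odd k) => /= h; apply/eqP/eqP; lia.
Qed.

Lemma piv_inj j0 j j' : piv j0 j = piv j0 j' -> j = j'.
Proof. rewrite /piv; case: (j =P j0); case: (j =P 0); case: (j' =P j0); case: (j' =P 0); lia. Qed.

Lemma piv_eq0 j0 j : (piv j0 j == 0) = (j == j0).
Proof. rewrite /piv; case: (j =P j0); case: (j =P 0) => //=; lia. Qed.

Lemma piv_lt j0 j m : j0 < m -> j < m -> piv j0 j < m.
Proof. rewrite /piv; case: (j =P j0); case: (j =P 0) => //=; lia. Qed.

Lemma step_sum n (Np : 0 < 2*n) (y : 'I_(2*n)) s j0 j (x : 'I_(2*n)) :
  1 < n -> odd s -> coprime s (2*n) ->
  \sum_(k < 2*n) (if x \in [set om Np (y + k*s); om Np (y + k.+1*s)] then lab n j0 j k else 0)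
   = 2 * (2*n * piv j0 j) + col n y x.
Proof.
move=> n1 so cop.
have [kx hkx] := walk_surj Np y cop x.
pose kp : 'I_(2*n) := om Np (kx + (2*n).-1).
have hkx2 := ltn_ord kx.
have kxp : kx != kp.
  apply/eqP => /(congr1 val) /=; rewrite mod2N; try lia.
  case: ifP; lia.
have mem : forall k : 'I_(2*n),
    (x \in [set om Np (y + k*s); om Np (y + k.+1*s)]) = (k == kx) || (k == kp).
  move=> k; rewrite in_set2 -hkx; congr (_ || _).
    apply/eqP/eqP => [/(congr1 val) /= h | ->] //.
    by apply: val_inj; apply: (walk_inj (y:=y) cop (ltn_ord k) (ltn_ord kx)); rewrite h.
  have -> : om Np (y + k.+1 * s) = om Np (y + (k.+1 %% (2*n)) * s).
    by apply: val_inj => /=; apply/eqP; rewrite eqn_modDl modnMml.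
  rewrite (_ : (k == kp) = (k.+1 %% (2*n) == kx)); last first.
    by rewrite mod_pred ?ltn_ord.
  apply/eqP/eqP => [/(congr1 val) /= h | /eqP]; last by move/eqP => ->.
  apply/esym/(walk_inj cop (ltn_ord kx) _ h); exact: ltn_pmod.
rewrite (eq_bigr (fun k : 'I_(2*n) => (if k == kx then lab n j0 j k else 0) +
                                      (if k == kp then lab n j0 j k else 0))); last first.
  move=> k _; rewrite mem; case: (boolP (k == kx)) => [/eqP -> | _].
    by rewrite (negbTE kxp) addn0.
  by rewrite add0n.
rewrite big_split /= -!big_mkcond !big_pred1_eq /lab.
have oddx : odd x = odd y (+) odd kx.
  by rewrite -hkx /= odd_mod ?odd2n // oddD oddM so andbT.
have xy : (val x == val y) = (kx == 0 :> nat).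
  apply/eqP/eqP => [h|h].
    apply: (walk_inj (y := y) cop (ltn_ord kx) (_ : 0 < 2*n)); first lia.
    by rewrite mul0n addn0 (modn_small (ltn_ord y)); move: h; rewrite -hkx.
  by rewrite -hkx /= h mul0n addn0 modn_small.
have kpv : val kp = if kx == 0 :> nat then (2*n).-1 else kx.-1.
  rewrite /= mod2N; try lia; case: ifP; case: eqP; lia.
rewrite /col oddx kpv xy.
case: (val kx) hkx2 => [|q] hq /=.
  rewrite /inner /= addn0.
  have o1 : odd (2*n).-1 = true.
    rewrite (_ : (2*n).-1 = (n.-1).*2.+1); last lia.
    by rewrite /= odd_double.
  have := odd_double_half (2*n).-1; rewrite o1.
  by rewrite addbF eqxx => /= h; lia.
rewrite /inner /=; have := odd_double_half q; have := odd_double_half q.+1.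
rewrite /=; case: (odd q) => /= h1 h2; case: (odd y) => /=; lia.
Qed.


Lemma lab_inj n j0 j j' k k' : 0 < n -> k < 2*n -> k' < 2*n ->
  lab n j0 j k = lab n j0 j' k' -> j = j' /\ k = k'.
Proof.
move=> n0 hk hk' e.
have hd : 0 < 2*n by lia.
have e1 := congr1 (fun t => t %% (2*n)) e; have e2 := congr1 (fun t => t %/ (2*n)) e.
rewrite /lab /= ![2*n * _]mulnC !modnMDl !modn_small ?inner_lt // in e1.
rewrite /lab /= ![2*n * _]mulnC !divnMDl // !divn_small ?inner_lt // !addn0 in e2.
by split; [exact: piv_inj e2 | exact: inner_inj e1].
Qed.

Definition Fp n (Np : 0 < 2*n) S y m (p : 'I_m * 'I_(2*n)) := Fe Np S y p.1 p.2.

Definition flab n (Np : 0 < 2*n) S y m j0 (E : {set 'I_(2*n)}) : nat :=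
  \sum_(p : 'I_m * 'I_(2*n)) (E == Fp Np S y p) * lab n j0 p.1 p.2.

Lemma upper n S (y : 'I_(2*n)) j0 (Np : 0 < 2*n) : 1 < n -> uniq S -> all odd S ->
  all (fun s => 0 < s < n) S -> all (fun s => coprime s (2*n)) S -> j0 < size S ->
  exists f, local_antimagic (del_edge (circ_adj S) (Fe Np S y j0 0)) f /\
            num_colors (del_edge (circ_adj S) (Fe Np S y j0 0)) f <= 3.
Proof.
move=> n1 uS oS ltS cop j0m.
set m := size S.
set G := del_edge _ _.
pose F := @Fp n Np S y m.
pose f := @flab n Np S y m j0.
have Finj : injective F.
  move=> [j k] [j' k'] /= E.
  have [h1 h2] := Fe_inj uS ltS cop (ltn_ord j) (ltn_ord j') (ltn_ord k) (ltn_ord k') E.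
  by congr (_, _); apply: val_inj.
have edgesE : edges (circ_adj S) = [set F p | p : 'I_m * 'I_(2*n)].
  apply/setP => E; apply/idP/imsetP.
    move=> /(edge_Fe Np y cop) [j [k [hj hk ->]]].
    by exists (Ordinal hj, Ordinal hk).
  move=> [[j k] _ ->]; apply: Fe_edge; first exact: ltn_ord.
  have /andP[] := allP ltS _ (mem_nth 0 (ltn_ord j)); rewrite /=; lia.
have fF : forall p, f (F p) = lab n j0 p.1 p.2.
  move=> p; rewrite /f /flab (bigD1 p) //= eqxx mul1n big1 ?addn0 //.
  by move=> q qp; rewrite (_ : (F p == F q) = false) //; apply/negbTE; apply: contra qp => /eqP/Finj ->.
pose p0 : 'I_m * 'I_(2*n) := (Ordinal j0m, Ordinal Np).
have eF : Fe Np S y j0 0 = F p0 by [].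
have fe : f (F p0) = 0 by rewrite fF /lab /= /piv eqxx muln0.
have e_in : F p0 \in edges (circ_adj S) by rewrite edgesE imset_f.
have edgesG : edges G = edges (circ_adj S) :\ F p0.
  apply/setP => E; rewrite !inE /G /del_edge eF; apply/idP/idP.
    case/existsP=> a /existsP[b /andP[/andP[hab hne] /eqP ->]]; rewrite hne /=.
    by apply/existsP; exists a; apply/existsP; exists b; rewrite hab eqxx.
  case/andP => hne /existsP[a /existsP[b /andP[hab /eqP hE]]].
  by apply/existsP; exists a; apply/existsP; exists b; rewrite hab -hE hne eqxx.
have cardG : #|edges G| = 2*n*m - 1.
  rewrite edgesG; have := cardsD1 (F p0) (edges (circ_adj S)).
  rewrite e_in edgesE card_imset // card_prod !card_ord => h.
  by rewrite (mulnC (2*n)) h /= add1n subn1.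
have inG : forall E, E \in edges G -> exists p, E = F p /\ p != p0.
  move=> E; rewrite edgesG in_setD1 => /andP[hne]; rewrite edgesE => /imsetP[p _ hp].
  exists p; split => //; apply: contra hne => /eqP <-; by rewrite hp.
pose Q := \sum_(j < m) 2 * (2*n * piv j0 j).
have vs : forall x, vsum G f x = Q + m * col n y x.
  move=> x; rewrite /vsum big_mkcondr edgesG.
  rewrite (_ : \sum_(i in edges (circ_adj S) :\ F p0) _ =
               \sum_(i in edges (circ_adj S)) (if x \in i then f i else 0)); last first.
    by rewrite [in RHS](big_setD1 (F p0)) //= fe if_same.
  rewrite edgesE big_imset /=; last by move=> p q _ _; apply: Finj.
  under eq_bigr => p _ do rewrite fF.
  rewrite -(pair_big xpredT xpredT (fun j k => if x \in F (j, k) then lab n j0 j k else 0)) /=.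
  rewrite (eq_bigr (fun j : 'I_m => 2 * (2*n * piv j0 j) + col n y x)); last first.
    move=> j _; rewrite /F /Fp /Fe /=.
    apply: step_sum => //; first exact: (allP oS _ (mem_nth 0 (ltn_ord j))).
    exact: (allP cop _ (mem_nth 0 (ltn_ord j))).
  by rewrite big_split /= sum_nat_const card_ord.
have m0 : 0 < m by lia.
exists f; split; last first.
  rewrite /num_colors.
  have -> : 3 = size [:: Q + m * (2*n).-1; Q + m * n; Q + m * (2*n)] by [].
  apply: uniq_leq_size; first exact: undup_uniq.
  move=> z; rewrite mem_undup => /mapP[x _ ->]; rewrite vs /col !inE.
  by case: ifP => _; rewrite ?eqxx //; case: ifP => _; rewrite ?eqxx ?orbT.
split.
- move=> E E' /inG[p [-> _]] /inG[q [-> _]]; rewrite !fF => /lab_inj.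
  case=> //; try lia; try exact: ltn_ord.
  by move=> h1 h2; congr F; move: p q h1 h2 => [j k] [j' k'] /= h1 h2; congr (_, _); apply: val_inj.
- move=> E /inG[[j k] [-> hp]]; rewrite fF cardG /lab /=.
  have hk := ltn_ord k; have hj := ltn_ord j.
  have hpiv := piv_lt j0m hj.
  have h3 : 2*n * (piv j0 j).+1 <= 2*n * m by rewrite leq_mul2l hpiv orbT.
  have hin := inner_lt hk.
  rewrite mulnS in h3.
  have nz : (piv j0 j != 0) || (inner n k != 0).
    rewrite piv_eq0 inner_eq0 //; last lia.
    apply: contraR hp; rewrite negb_or !negbK => /andP[/eqP h1 /eqP h2].
    by apply/eqP; congr (_, _); apply: val_inj.
  have hp2 : piv j0 j = 0 \/ 2*n <= 2*n * piv j0 j.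
    case: (piv j0 j) => [|pv]; [by left | by right; rewrite leq_pmulr].
  have nz' : 0 < piv j0 j \/ 0 < inner n k.
    by case/orP: nz; rewrite -lt0n; [left | right].
  apply/andP; split; lia.
- move=> x x' hxx'; rewrite !vs eqn_add2l eqn_mul2l negb_or -lt0n m0 /=.
  have := adj_odd oS (andP hxx').1; rewrite /col.
  case: (odd x); case: (odd x'); case: (odd y) => //= _; do ?case: ifP => _; lia.
Qed.


Theorem mainTheorem8 (n : nat) (a : seq nat) :
  2 <= n ->
  sorted ltn a ->
  all (fun x => (1 < x) && (x < n)) a ->
  all (fun x => coprime x (2 * n)) a ->
  forall u v : 'I_(2 * n), circ_adj (1 :: a) u v ->
  chi_la_eq (del_edge (circ_adj (1 :: a)) [set u; v]) 3.
Proof.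
move=> n2 sa ra ca u v huv.
set S := 1 :: a.
have Np : 0 < 2*n by lia.
have uS : uniq S.
  rewrite /S /= (sorted_uniq ltn_trans ltnn sa) andbT.
  by apply/negP => /(allP ra) /andP[].
have oS : all odd S.
  rewrite /S /=; apply/allP => x /(allP ca) h.
  by rewrite -coprimen2 (coprime_dvdr _ h) // dvdn_mulr.
have ltS : all (fun s => 0 < s < n) S.
  rewrite /S /=; apply/andP; split; first lia.
  by apply/allP => x /(allP ra); lia.
have cS : all (fun s => coprime s (2*n)) S by rewrite /S /= coprime1n.
have S1 : 1 \in S by rewrite inE eqxx.
have [y [j0 [hj0 ey]]] : exists (y : 'I_(2*n)) j0, j0 < size S /\ [set u; v] = Fe Np S y j0 0.
  move: (huv) => /andP[uv /hasP[s sS /orP[] /eqP h]].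
  - exists u, (index s S); split; first by rewrite index_mem.
    rewrite /Fe nth_index //; congr [set _; _]; apply: val_inj => /=.
      by rewrite mul0n addn0 modn_small.
    by rewrite mul1n.
  - exists v, (index s S); split; first by rewrite index_mem.
    rewrite setUC /Fe nth_index //; congr [set _; _]; apply: val_inj => /=.
      by rewrite mul0n addn0 modn_small.
    by rewrite mul1n.
have [f [fa fc]] := upper y Np n2 uS oS ltS cS hj0.
rewrite ey; split.
  exists f; split => //; apply/eqP; rewrite eqn_leq fc /=.
  rewrite -ey; apply: (lower (u := u) (v := v)) => //.
  by rewrite ey.
move=> g hg; rewrite -ey; apply: lower => //.
by rewrite ey.
Qed.
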